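(* For all positive integers $k$ and $n$, with $\ell:=\lfloor (k+1)^2/4\rfloor$ and $q:=n\bmod \ell$, \[ \nu_k(K_{k+1,n}) \le q\binom{\frac{n-q}{\ell}+1}{2} + (\ell-q)\binom{\frac{n-q}{\ell}}{2}. \]
   Context: A book with $k$ pages consists of a line (the spine) and $k$ half-planes (the pages) whose common boundary is the spine. A $k$-page drawing of a graph places all vertices on the spine and draws each edge inside a single page (edges may cross). $\nu_k(G)$ is the minimum number of crossings over all $k$-page drawings of $G$. Convention: $\binom{a}{b}=0$ whenever $a<b$. *)

(* Defs.v *)
From mathcomp Require Import all_boot all_fingroup.
Set Implicit Arguments. Unset Strict Implicit. Unset Printing Implicit Defensive.

Record graph := Graph {
  gV : finType;
  gE : finType;
  gends : gE -> gV * gV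
}.

Definition Kbip (m n : nat) : graph :=
  @Graph ('I_m + 'I_n)%type ('I_m * 'I_n)%type (fun e => (inl e.1, inr e.2)).

(* A k-page book drawing of G: a linear order of the vertices along the spine
   (given by a permutation sigma: vertex v sits at position enum_rank (sigma v))
   together with an assignment of each edge to one of the k pages. *)
Definition drawing (k : nat) (G : graph) : finType :=
  prod {perm gV G} {ffun gE G -> 'I_k}.

Section Crossings.
Variables (k : nat) (G : graph) (D : drawing k G).

Definition spos (v : gV G) : nat := enum_rank (D.1 v).
Definition elo (e : gE G) : nat := minn (spos (gends e).1) (spos (gends e).2).
Definition ehi (e : gE G) : nat := maxn (spos (gends e).1) (spos (gends e).2).

(* The oriented condition lo e < lo f < hi e < hi f holds for
   exactly one orientation of each crossing pair, so counting ordered pairs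
   satisfying it counts each crossing exactly once. *)
Definition ocross (e f : gE G) : bool :=
  (D.2 e == D.2 f) && [&& elo e < elo f, elo f < ehi e & ehi e < ehi f].

Definition crossings : nat := #|[set p : gE G * gE G | ocross p.1 p.2]|.
End Crossings.

(* nu_k(G): minimum number of crossings over all k-page drawings of G.
   (The neutral element #|E|^2 bounds the crossing number of any drawing, so
   it does not affect the minimum whenever a k-page drawing exists, i.e. k > 0
   or G has no edges.) *)
Definition nu (k : nat) (G : graph) : nat :=
  \big[minn/(#|gE G| ^ 2)]_(D : drawing k G) crossings D.

(* Main.v *)
Require Import Defs.
From mathcomp Require Import all_boot all_fingroup zify.

Definition AA k := k.+1 %/ 2.
Definition GG k := (AA k).-1.
Definition WW k := k.+1 - AA k.
Definition LL k := AA k * WW k.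
Definition cls k (j : nat) := j %% LL k.
Definition gg k j := cls k j %/ WW k.
Definition xx k j := GG k + cls k j %% WW k.

Lemma AA_pos k : 0 < k -> 0 < AA k.
Proof. move=> kp; rewrite /AA divn_gt0 //; lia. Qed.

Lemma AA_le k : 0 < k -> 2 * AA k <= k.+1.
Proof. move=> kp; rewrite /AA. have := divn_eq k.+1 2. have := ltn_pmod k.+1 (isT : 0 < 2). lia. Qed.

Lemma WW_pos k : 0 < k -> 0 < WW k.
Proof. move=> kp; have := AA_le k kp; have := AA_pos k kp; rewrite /WW; lia. Qed.

Lemma GG_lt k : 0 < k -> GG k < k.
Proof. move=> kp; have := AA_le k kp; have := AA_pos k kp; rewrite /GG; lia. Qed.

Lemma LL_pos k : 0 < k -> 0 < LL k.
Proof. move=> kp; rewrite /LL muln_gt0 AA_pos /=; [exact: WW_pos|done]. Qed.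

Lemma LL_eq k : 0 < k -> LL k = k.+1 ^ 2 %/ 4.
Proof.
move=> kp; rewrite /LL /WW /AA.
have := divn_eq k.+1 2; have := ltn_pmod k.+1 (isT : 0 < 2).
move: (k.+1 %/ 2) (k.+1 %% 2) => q r hr hk.
rewrite hk.
case: r hr hk => [|[|r]] // _ _.
- have -> : q * 2 + 0 - q = q by lia.
  have -> : (q * 2 + 0) ^ 2 = q * q * 4 by rewrite !expnS expn0; lia.
  by rewrite mulnK.
- have -> : q * 2 + 1 - q = q.+1 by lia.
  have -> : (q * 2 + 1) ^ 2 = (q * q.+1) * 4 + 1 by rewrite !expnS expn0; lia.
  rewrite divnMDl // divn_small //; lia.
Qed.

Lemma gg_le k j : 0 < k -> gg k j <= GG k.
Proof.
move=> kp; rewrite /gg /GG.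
have hc : cls k j < AA k * WW k by rewrite /cls ltn_pmod // LL_pos.
have : cls k j %/ WW k < AA k by rewrite ltn_divLR ?WW_pos.
lia.
Qed.

Lemma xx_ge k j : GG k <= xx k j.
Proof. by rewrite /xx leq_addr. Qed.

Lemma xx_lt k j : 0 < k -> xx k j < k.
Proof.
move=> kp; rewrite /xx /GG.
have := ltn_pmod (cls k j) (WW_pos k kp).
have := AA_le k kp; have := AA_pos k kp; rewrite /WW; lia.
Qed.

Lemma cls_dec k j : 0 < k -> cls k j = gg k j * WW k + (xx k j - GG k).
Proof. move=> kp; rewrite /gg /xx addKn; exact: divn_eq. Qed.

Definition key k n (v : 'I_k.+1 + 'I_n) : nat :=
  match v with
  | inl m => 2 * ((m.+1 * WW k) * n)
  | inr j => (2 * (cls k j * n + j)).+1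
  end.

Lemma div_lex (a b c d n : nat) : b < n -> d < n -> (a * n + b < c * n + d) = (a < c) || ((a == c) && (b < d)).
Proof.
move=> hb hd.
case: (ltngtP a c) => h /=.
- apply/idP; have : a.+1 * n <= c * n by rewrite leq_mul2r h orbT.
  rewrite mulSn; lia.
- apply/negbTE; rewrite -leqNgt; have : c.+1 * n <= a * n by rewrite leq_mul2r h orbT.
  rewrite mulSn; lia.
- by subst; rewrite ltn_add2l.
Qed.

Lemma key_inj {k n} : 0 < k -> 0 < n -> injective (key k n).
Proof.
move=> kp hn [m|j] [m'|j'] /=.
- move=> h; congr inl; apply: val_inj => /=.
  have hW := WW_pos k kp.
  have : m.+1 * WW k * n = m'.+1 * WW k * n by lia.
  move/eqP; rewrite eqn_pmul2r // eqn_pmul2r //; by case/eqP.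
- move=> h; exfalso; move: (congr1 odd h); by rewrite /= ?oddS !oddM.
- move=> h; exfalso; move: (congr1 odd h); by rewrite /= ?oddS !oddM.
- move=> h; have h2 : cls k j * n + j = cls k j' * n + j' by lia.
  apply/congr1/val_inj => /=.
  have := congr1 (modn^~ n) h2; rewrite /= !modnMDl !modn_small //.
Qed.

Definition rnk {k n} (v : 'I_k.+1 + 'I_n) : nat := #|[set u | key k n u < key k n v]|.

Lemma rnk_lt {k n} (u v : 'I_k.+1 + 'I_n) : 0 < k -> 0 < n -> (rnk u < rnk v) = (key k n u < key k n v).
Proof.
move=> kp hn; rewrite /rnk.
case: (ltngtP (key k n u) (key k n v)) => h.
- apply: proper_card; apply/properP; split.
  + apply/subsetP => w; rewrite !inE => hw; exact: ltn_trans hw h.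
  + by exists u; rewrite !inE ?h ?ltnn.
- apply/negbTE; rewrite -leqNgt; apply: subset_leq_card.
  apply/subsetP => w; rewrite !inE => hw; exact: ltn_trans hw h.
- by rewrite (key_inj kp hn _ _ h) ltnn.
Qed.

Lemma rnk_bound {k n} (v : 'I_k.+1 + 'I_n) : rnk v < #|{: 'I_k.+1 + 'I_n}|.
Proof.
rewrite /rnk; apply: proper_card; apply/properP; split; first exact: subset_predT.
by exists v; rewrite ?inE ?ltnn.
Qed.

Definition rnko {k n} (v : 'I_k.+1 + 'I_n) : 'I_#|{: 'I_k.+1 + 'I_n}| := Ordinal (rnk_bound v).

Definition sfun {k n} (v : 'I_k.+1 + 'I_n) : 'I_k.+1 + 'I_n := enum_val (rnko v).

Lemma sfun_inj {k n} : 0 < k -> 0 < n -> injective (@sfun k n).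
Proof.
move=> kp hn u v E.
have h : rnk u = rnk v.
  by have := congr1 (fun w => nat_of_ord (enum_rank w)) E; rewrite /sfun !enum_valK.
apply: (key_inj kp hn).
case: (ltngtP (key k n u) (key k n v)) => // H.
- by move: H; rewrite -(rnk_lt _ _ kp hn) h ltnn.
- by move: H; rewrite -(rnk_lt _ _ kp hn) h ltnn.
Qed.

Lemma KA k n (m : 'I_k.+1) (j : 'I_n) : 0 < k ->
  (key k n (inl m) < key k n (inr j)) = (m < gg k j).
Proof.
move=> kp /=.
have hW := WW_pos k kp.
have E1 : (2 * (m.+1 * WW k * n) < (2 * (cls k j * n + j)).+1) = (m.+1 * WW k * n <= cls k j * n + j) by lia.
rewrite E1 /gg leq_divRL //.
have hj := ltn_ord j.
case: (leqP (m.+1 * WW k) (cls k j)) => h.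
- apply/idP; apply: leq_trans (leq_addr _ _); by rewrite leq_mul2r h orbT.
- apply/negbTE; rewrite -ltnNge.
  have : (cls k j).+1 * n <= m.+1 * WW k * n by rewrite leq_mul2r h orbT.
  rewrite mulSn; lia.
Qed.

Lemma KB k n (m : 'I_k.+1) (j : 'I_n) : 0 < k ->
  (key k n (inr j) < key k n (inl m)) = (gg k j <= m).
Proof.
move=> kp; rewrite [(gg k j <= m)]leqNgt -KA //=.
set X := m.+1 * WW k * n; set Y := cls k j * n + j.
apply/idP/idP; lia.
Qed.

Lemma KAA k n (m m' : 'I_k.+1) : 0 < k -> 0 < n ->
  (key k n (inl m) < key k n (inl m')) = (m < m').
Proof.
move=> kp hn /=.
rewrite ltn_pmul2l // ltn_pmul2r // ltn_pmul2r ?WW_pos //.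
Qed.

Lemma KBB k n (j j' : 'I_n) : 0 < k ->
  key k n (inr j) < key k n (inr j') -> cls k j < cls k j' \/ (cls k j = cls k j' /\ j < j').
Proof.
move=> kp /=.
have h : (2 * (cls k j * n + j)).+1 < (2 * (cls k j' * n + j')).+1 -> cls k j * n + j < cls k j' * n + j' by lia.
move/h; rewrite div_lex //; case/orP => [->|/andP [/eqP -> ->]]; by [left|right].
Qed.

Lemma cls_lex k (j j' : nat) : 0 < k -> cls k j <= cls k j' ->
  gg k j < gg k j' \/ (gg k j = gg k j' /\ xx k j <= xx k j').
Proof.
move=> kp h.
have := leq_div2r (WW k) h; rewrite -/(gg k j) -/(gg k j').
rewrite leq_eqVlt => /orP [/eqP E|]; last by left.
right; split => //.
move: h; rewrite (cls_dec k j kp) (cls_dec k j' kp) E.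
have := xx_ge k j; have := xx_ge k j'. lia.
Qed.

Definition sgm {k n} (kp : 0 < k) (hn : 0 < n) : {perm 'I_k.+1 + 'I_n} := perm (sfun_inj kp hn).

Definition upg k (m j : nat) := (if xx k j < m then m.-1 else m) + gg k j.

Lemma upg_mod k m j : 0 < k -> m <= k -> upg k m j %% k = if upg k m j < k then upg k m j else upg k m j - k.
Proof.
move=> kp hm.
have h1 := gg_le k j kp; have h2 := GG_lt k kp; have h3 := xx_lt k j kp.
have hb : upg k m j < k + k.
  rewrite /upg; case: ifP => h; lia.
case: ifP => h; first exact: modn_small.
have -> : upg k m j = (upg k m j - k) + k by rewrite subnK // leqNgt h.
by rewrite modnDr modn_small ?addnK; lia.
Qed.

Definition pgf k n (kp : 0 < k) : {ffun 'I_k.+1 * 'I_n -> 'I_k} :=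
  [ffun e : 'I_k.+1 * 'I_n => Ordinal (ltn_pmod (upg k e.1 e.2) kp)].

Definition DD {k n} (kp : 0 < k) (hn : 0 < n) : drawing k (Kbip k.+1 n) := (sgm kp hn, pgf k n kp).

Lemma spos_DD k n (kp : 0 < k) (hn : 0 < n) v : spos (DD kp hn) v = @rnk k n v.
Proof. by rewrite /spos /DD /= permE /sfun enum_valK. Qed.
Lemma core_arith (k G m m' g g' x x' u u' : nat) (P : Prop) :
  G < k -> m <= k -> m' <= k -> g <= G -> g' <= G -> G <= x -> x < k -> G <= x' -> x' < k ->
  u = (if x < m then m.-1 else m) + g ->
  u' = (if x' < m' then m'.-1 else m') + g' ->
  (if u < k then u else u - k) = (if u' < k then u' else u' - k) ->
  ((m < g /\ m' < g' /\ m < m' /\ m' < g /\ (g < g' \/ (g = g' /\ x <= x'))) \/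
   (m < g /\ g' <= m' /\ m < g' /\ (g' < g \/ (g' = g /\ x' <= x)) /\ g <= m') \/
   (g <= m /\ m' < g' /\ g <= m' /\ m' < m /\ m < g' /\ (g < g' \/ (g = g' /\ x <= x'))) \/
   (g <= m /\ g' <= m' /\ (g < g' \/ (g = g' /\ x <= x')) /\ g' <= m /\ m < m' /\ P)) ->
  g = g' /\ x = x' /\ m = x /\ m' = x.+1 /\ (m < g -> False) /\ (m' < g' -> False) .
Proof.
move=> ? ? ? ? ? ? ? ? ? Hu Hu' Hp Hc0.
have Hc : ((m < g /\ m' < g' /\ m < m' /\ m' < g /\ (g < g' \/ (g = g' /\ x <= x'))) \/
   (m < g /\ g' <= m' /\ m < g' /\ (g' < g \/ (g' = g /\ x' <= x)) /\ g <= m') \/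
   (g <= m /\ m' < g' /\ g <= m' /\ m' < m /\ m < g' /\ (g < g' \/ (g = g' /\ x <= x'))) \/
   (g <= m /\ g' <= m' /\ (g < g' \/ (g = g' /\ x <= x')) /\ g' <= m /\ m < m')).
  case: Hc0 => [H|[H|[H|[H1 [H2 [H3 [H4 [H5 _]]]]]]]]; [left|right;left|right;right;left|right;right;right] => //.
clear Hc0; subst u u'; move: Hp.
case: (ltnP x m) => h1; case: (ltnP x' m') => h2;
set u := (_ + g); set u' := (_ + g');
case: (ltnP u k) => h3; case: (ltnP u' k) => h4 Hp; rewrite /u /u' in h3 h4 Hp; lia.
Qed.
Lemma core_pos (m m' g g' x x' pa pb pa' pb' : nat) :
  (pa < pb <-> m < g) -> (pb < pa <-> g <= m) ->
  (pa' < pb' <-> m' < g') -> (pb' < pa' <-> g' <= m') ->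
  (pa < pb' <-> m < g') -> (pb' < pa <-> g' <= m) ->
  (pa' < pb <-> m' < g) -> (pb < pa' <-> g <= m') ->
  (pa < pa' <-> m < m') -> (pa' < pa <-> m' < m) ->
  (pb < pb' -> g < g' \/ (g = g' /\ x <= x')) ->
  (pb' < pb -> g' < g \/ (g' = g /\ x' <= x)) ->
  minn pa pb < minn pa' pb' -> minn pa' pb' < maxn pa pb -> maxn pa pb < maxn pa' pb' ->
  ((m < g /\ m' < g' /\ m < m' /\ m' < g /\ (g < g' \/ (g = g' /\ x <= x'))) \/
   (m < g /\ g' <= m' /\ m < g' /\ (g' < g \/ (g' = g /\ x' <= x)) /\ g <= m') \/
   (g <= m /\ m' < g' /\ g <= m' /\ m' < m /\ m < g' /\ (g < g' \/ (g = g' /\ x <= x'))) \/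
   (g <= m /\ g' <= m' /\ (g < g' \/ (g = g' /\ x <= x')) /\ g' <= m /\ m < m' /\ pb < pb')).
Proof.
move=> Hab Hba Hab' Hba' Hab2 Hb'a Ha'b Hba'2 Haa Ha'a Hbb Hb'b C1 C2 C3.
case: (ltnP m g) => h1; case: (ltnP m' g') => h2.
- have h1' := proj2 Hab h1; have h2' := proj2 Hab' h2.
  have e1 : minn pa pb = pa by lia. have e2 : maxn pa pb = pb by lia.
  have e3 : minn pa' pb' = pa' by lia. have e4 : maxn pa' pb' = pb' by lia.
  rewrite e1 e2 e3 e4 in C1 C2 C3.
  left; split; [done|split; [done|split; [exact: proj1 Haa C1|split; [exact: proj1 Ha'b C2|exact: Hbb C3]]]].
- have h1' := proj2 Hab h1; have h2' := proj2 Hba' h2.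
  have e1 : minn pa pb = pa by lia. have e2 : maxn pa pb = pb by lia.
  have e3 : minn pa' pb' = pb' by lia. have e4 : maxn pa' pb' = pa' by lia.
  rewrite e1 e2 e3 e4 in C1 C2 C3.
  right; left; split; [done|split; [done|split; [exact: proj1 Hab2 C1|split; [exact: Hb'b C2|exact: proj1 Hba'2 C3]]]].
- have h1' := proj2 Hba h1; have h2' := proj2 Hab' h2.
  have e1 : minn pa pb = pb by lia. have e2 : maxn pa pb = pa by lia.
  have e3 : minn pa' pb' = pa' by lia. have e4 : maxn pa' pb' = pb' by lia.
  rewrite e1 e2 e3 e4 in C1 C2 C3.
  right; right; left; split; [done|split; [done|split; [exact: proj1 Hba'2 C1|split; [exact: proj1 Ha'a C2|split; [exact: proj1 Hab2 C3| apply: Hbb; lia]]]]].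
- have h1' := proj2 Hba h1; have h2' := proj2 Hba' h2.
  have e1 : minn pa pb = pb by lia. have e2 : maxn pa pb = pa by lia.
  have e3 : minn pa' pb' = pb' by lia. have e4 : maxn pa' pb' = pa' by lia.
  rewrite e1 e2 e3 e4 in C1 C2 C3.
  right; right; right; split; [done|split; [done|split; [exact: Hbb C1|split; [exact: proj1 Hb'a C2|split; [exact: proj1 Haa C3|done]]]]].
Qed.

Lemma cross_char {k n} {kp : 0 < k} {hn : 0 < n} {e f : 'I_k.+1 * 'I_n} :
  ocross (DD kp hn) e f ->
  [/\ e.2 < f.2, cls k e.2 = cls k f.2, (e.1 : nat) = xx k e.2 & (f.1 : nat) = (xx k e.2).+1].
Proof.
case: e => m j; case: f => m' j'.
rewrite /ocross /elo /ehi /= !spos_DD => /andP [Hp /and3P [C1 C2 C3]].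
move: Hp; rewrite /DD /= /pgf !ffunE => /eqP /(congr1 val) /= Hp.
rewrite !upg_mod // in Hp; try by rewrite -ltnS ltn_ord.
have RA : forall (a : 'I_k.+1) (b : 'I_n), @rnk k n (inl a) < @rnk k n (inr b) <-> a < gg k b.
  by move=> a b; rewrite rnk_lt // KA.
have RB : forall (a : 'I_k.+1) (b : 'I_n), @rnk k n (inr b) < @rnk k n (inl a) <-> gg k b <= a.
  by move=> a b; rewrite rnk_lt // KB.
have RAA : forall (a a' : 'I_k.+1), @rnk k n (inl a) < @rnk k n (inl a') <-> a < a'.
  by move=> a a'; rewrite rnk_lt // KAA.
have RBB : forall (b b' : 'I_n), @rnk k n (inr b) < @rnk k n (inr b') ->
    gg k b < gg k b' \/ (gg k b = gg k b' /\ xx k b <= xx k b').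
  move=> b b'; rewrite rnk_lt // => /(KBB k n _ _ kp) H; apply: (cls_lex k _ _ kp).
  by case: H => [/ltnW|[->]].
have := core_pos _ _ _ _ _ _ _ _ _ _ (RA m j) (RB m j) (RA m' j') (RB m' j') (RA m j') (RB m j')
   (RA m' j) (RB m' j) (RAA m m') (RAA m' m) (RBB j j') (RBB j' j) C1 C2 C3.
move=> Hc.
have [Eg [Ex [Em [Em' [N1 N2]]]]] := core_arith _ _ _ _ _ _ _ _ _ _ _ (GG_lt k kp) (ltn_ord m) (ltn_ord m')
  (gg_le k j kp) (gg_le k j' kp) (xx_ge k j) (xx_lt k j kp) (xx_ge k j') (xx_lt k j' kp)
  (erefl (upg k m j)) (erefl (upg k m' j')) Hp Hc.
have Hbb : @rnk k n (inr j) < @rnk k n (inr j').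
  case: Hc => [[/N1 //]|[[/N1 //]|[[_ [/N2 //]]|[_ [_ [_ [_ [_ H]]]]]]]] //.
have Ec : cls k j = cls k j' by rewrite (cls_dec k j kp) (cls_dec k j' kp) Eg Ex.
move: Hbb; rewrite rnk_lt // => /(KBB k n _ _ kp); rewrite Ec ltnn => -[//|[_ Hj]].
by split => //=; rewrite -Ex.
Qed.

Lemma bigmin_le (T : finType) (F : T -> nat) x0 i0 : \big[minn/x0]_(i : T) F i <= F i0.
Proof.
have : i0 \in index_enum T by exact: mem_index_enum.
elim: (index_enum T) => [|a r IH] //= Hin; rewrite big_cons.
case/predU1P: Hin => [->|/IH H]; first exact: geq_minl.
exact: leq_trans (geq_minr _ _) H.
Qed.

Lemma sum_part L s r : 0 < L -> r <= L -> \sum_(s * L <= j < s * L + r) j %/ L = r * s.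
Proof.
move=> hL; elim: r => [|r IH] hr; first by rewrite addn0 big_geq.
rewrite addnS big_nat_recr ?leq_addr // IH ?(ltnW hr) // divnMDl // divn_small //.
by rewrite addn0 mulSn addnC.
Qed.

Lemma sum_full L s : 0 < L -> \sum_(0 <= j < s * L) j %/ L = L * 'C(s, 2).
Proof.
move=> hL; elim: s => [|s IH]; first by rewrite mul0n big_geq // (_ : 'C(0, 2) = 0) // muln0.
rewrite (big_cat_nat (n := s * L)) //= ?leq_pmul2r ?leqnSn //.
rewrite IH (_ : s.+1 * L = s * L + L); last by rewrite mulSn addnC.
rewrite sum_part // binS bin1 mulnDr; lia.
Qed.

Lemma sum_all L N : 0 < L -> \sum_(0 <= j < N) j %/ L = L * 'C(N %/ L, 2) + (N %% L) * (N %/ L).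
Proof.
move=> hL.
have EN := divn_eq N L.
rewrite {1}EN (big_cat_nat (n := N %/ L * L)) //= ?leq_addr // sum_full // sum_part //.
exact: ltnW (ltn_pmod _ hL).
Qed.

Lemma card_lt_sum n L : 0 < L ->
  #|[set p : 'I_n * 'I_n | (p.2 : nat) < p.1 %/ L]| = \sum_(0 <= j < n) j %/ L.
Proof.
move=> hL.
rewrite -sum1_card big_mkord.
rewrite (eq_bigl (fun p : 'I_n * 'I_n => true && ((p.2 : nat) < p.1 %/ L))); last by move=> p; rewrite inE.
rewrite -(pair_big_dep xpredT (fun (i : 'I_n) (i' : 'I_n) => (i' : nat) < i %/ L) (fun _ _ => 1)).
apply: eq_bigr => i _.
rewrite -(big_mkord (fun i' => i' < i %/ L) (fun _ => 1)).
rewrite (eq_bigl (fun i' => true && (i' < i %/ L))) // -big_nat_widen; last exact: leq_trans (leq_div _ _) (ltnW (ltn_ord i)).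
by rewrite sum_nat_const_nat subn0 muln1.
Qed.

Definition phi k n (L : nat) (p : ('I_k.+1 * 'I_n) * ('I_k.+1 * 'I_n)) : 'I_n * 'I_n :=
  (p.2.2, Ordinal (leq_ltn_trans (leq_div p.1.2 L) (ltn_ord p.1.2))).

Lemma div_mono (L j j' : nat) : 0 < L -> j < j' -> j %% L = j' %% L -> j %/ L < j' %/ L.
Proof.
move=> hL hj hm; rewrite ltnNge; apply/negP => H.
have : j' %/ L * L <= j %/ L * L by rewrite leq_mul2r H orbT.
have := divn_eq j L; have := divn_eq j' L. lia.
Qed.

Lemma crossings_le k n (kp : 0 < k) (hn : 0 < n) :
  crossings (DD kp hn) <= #|[set p : 'I_n * 'I_n | (p.2 : nat) < p.1 %/ LL k]|.
Proof.
have hL := LL_pos k kp.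
rewrite /crossings -(card_in_imset (f := @phi k n (LL k))).
- apply: subset_leq_card; apply/subsetP => y /imsetP [p] Hc ->; rewrite inE in Hc.
  rewrite ?inE /=; case: (cross_char Hc) => hj hc _ _.
  exact: div_mono.
- move=> [[m j] [m' j']] [[m2 j2] [m2' j2']]; rewrite !inE /= => Hc Hc2 [E1 E2].
  case: (cross_char Hc) => /= _ hc Em Em'.
  case: (cross_char Hc2) => /= _ hc2 Em2 Em2'.
  subst j2'.
  have Ej : j = j2.
    apply: val_inj => /=.
    rewrite (divn_eq j (LL k)) (divn_eq j2 (LL k)) E2.
    by move: hc hc2; rewrite /cls => -> ->.
  subst j2.
  have Em3 : m = m2 by apply: val_inj; rewrite /= Em Em2.
  have Em4 : m' = m2' by apply: val_inj; rewrite /= Em' Em2'.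
  by rewrite Em3 Em4.
Qed.

Theorem lemma20 (k n : nat) : 0 < k -> 0 < n ->
  let l := (k.+1 ^ 2) %/ 4 in
  let q := n %% l in
  nu k (Kbip k.+1 n) <=
    q * 'C((n - q) %/ l + 1, 2) + (l - q) * 'C((n - q) %/ l, 2).
Proof.
move=> kp hn; cbv zeta.
have hL := LL_pos k kp.
rewrite -(LL_eq k kp).
rewrite /nu; apply: leq_trans (bigmin_le _ _ _ (DD kp hn)) _.
apply: leq_trans (crossings_le _ _ kp hn) _.
rewrite card_lt_sum // sum_all //.
set L := LL k.
have Es : (n - n %% L) %/ L = n %/ L.
  by rewrite {1}(divn_eq n L) addnK mulnK.
rewrite Es addn1 binS bin1.
have hr : n %% L <= L by exact: ltnW (ltn_pmod _ hL).
rewrite mulnBl mulnDr.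
have : n %% L * 'C(n %/ L, 2) <= L * 'C(n %/ L, 2) by rewrite leq_mul2r hr orbT.
lia.
Qed.
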